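(* Consider the hybrid network model described in the context with $\bm u\equiv \bm 0$. Assume $|\phi(\cdot)|\le\phi_{max}$ and $$c_n>d^{in}\max\{\overline a^+,|\underline a^-|\}.$$ Then the neuronal state equation $$\dot{\bm x}=-C_n\bm x+\Gamma(A(t)\bm x),$$ with the piecewise constant weight matrix $A(t)$ generated by the weight update rule, is asymptotically stable: the origin is stable and every solution $\bm x(t)$ tends to $\bm 0$ as $t\to\infty$.
   Context: Let $\mathcal G=(\mathcal V,\mathcal E)$ be a directed graph with $N=|\mathcal V|$ nodes. Its edge set is split into disjoint sets $\mathcal E^+$ (excitatory) and $\mathcal E^-$ (inhibitory) with $\mathcal E=\mathcal E^+\cup\mathcal E^-$. The edge $(j,i)$ goes from node $j$ to node $i$. Let $d^{in}$ be the maximum in-degree of $\mathcal G$. Constants are $c_n>0$, $0<c_a^+,c_a^-<1$, $\theta>0$, $\tau>0$, and bounds $\underline a^-<\overline a^-<0<\underline a^+<\overline a^+$. The function $\phi:\mathbb R\to\mathbb R$ is bounded. For a scalar $y$, the clipping function is $[y]_{\underline y}^{\overline y}=\overline y$ if $y>\overline y$, $y$ if $\underline y\le y\le \overline y$, and $\underline y$ if $y<\underline y$. The threshold activation is $\gamma_\theta(s)=s$ if $|s|>\theta$ and $\gamma_\theta(s)=0$ otherwise; $\Gamma$ denotes $\gamma_\theta$ applied componentwise. The model (hybrid neuron/connectome dynamics): for $t\in(p\tau,(p+1)\tau]$, $p=0,1,2,\dots$, $$\dot x_i(t)=-c_nx_i(t)+\gamma_\theta\Big(\sum_{(j,i)\in\mathcal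 E}a_{ij}(t)x_j(t)\Big)+b_iu_i(t).$$ The weights are constant on each such interval and given by $$a_{ij}(t)=\big[c_a^-a_{ij}(p\tau)-\phi(x_i(p\tau)x_j(p\tau))\big]_{\underline a^-}^{\overline a^-}\quad\text{for }(j,i)\in\mathcal E^-,$$ $$a_{ij}(t)=\big[c_a^+a_{ij}(p\tau)+\phi(x_i(p\tau)x_j(p\tau))\big]_{\underline a^+}^{\overline a^+}\quad\text{for }(j,i)\in\mathcal E^+.$$ In addition, $a_{ij}\equiv0$ for non-edges, and $a_{ii}=0$. In vector form: $\dot{\bm x}=-C_n\bm x+\Gamma(A(t)\bm x)+B\bm u$, with $A=[a_{ij}]$ and $C_n=c_nI$. *)

(* Defs.v *)
From mathcomp Require Import all_boot all_order all_algebra.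
From mathcomp Require Import all_classical all_reals all_analysis.
Import Order.TTheory GRing.Theory Num.Theory.
Import numFieldNormedType.Exports.
Set Implicit Arguments.
Unset Strict Implicit.
Unset Printing Implicit Defensive.
Local Open Scope classical_set_scope.
Local Open Scope ring_scope.

(* Nodes are 'I_N.  A relation E : rel 'I_N encodes edges: E j i means the
   directed edge (j,i) from node j to node i.  Weights are stored as
   a i j = a_ij (weight of the edge (j,i)). *)

Definition clip (R : realType) (lo hi y : R) : R :=
  if hi < y then hi else if y < lo then lo else y.

Definition gamma_th (R : realType) (th s : R) : R :=
  if th < `|s| then s else 0.

Definition indeg (N : nat) (E : rel 'I_N) (i : 'I_N) : nat :=
  #|[set j : 'I_N | E j i]%SET|.
Definition max_indeg (N : nat) (E : rel 'I_N) : nat :=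
  (\max_(i < N) indeg E i)%N.

Definition weight_update (R : realType) (N : nat) (Ep Em : rel 'I_N)
  (cap cam lom him lop hip : R) (phi : R -> R)
  (a : 'I_N -> 'I_N -> R) (x : 'I_N -> R) : 'I_N -> 'I_N -> R :=
  fun i j =>
    if i == j then 0
    else if Em j i then clip lom him (cam * a i j - phi (x i * x j))
    else if Ep j i then clip lop hip (cap * a i j + phi (x i * x j))
    else 0.

(* weights p = A(p tau) : weights 0 = a0 is the initial weight matrix A(0),
   and weights p.+1 = A(t) for t in (p tau, (p+1) tau]. *)
Fixpoint weights (R : realType) (N : nat) (Ep Em : rel 'I_N)
  (cap cam lom him lop hip tau : R) (phi : R -> R)
  (a0 : 'I_N -> 'I_N -> R) (x : R -> 'I_N -> R) (p : nat)
  : 'I_N -> 'I_N -> R :=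
  match p with
  | 0%N => a0
  | q.+1 => weight_update Ep Em cap cam lom him lop hip phi
              (weights Ep Em cap cam lom him lop hip tau phi a0 x q)
              (x (q%:R * tau))
  end.

Definition is_solution (R : realType) (N : nat) (Ep Em : rel 'I_N)
  (cn cap cam th tau lom him lop hip : R) (phi : R -> R)
  (a0 : 'I_N -> 'I_N -> R) (x : R -> 'I_N -> R) : Prop :=
  (forall i, {within [set t : R | 0 <= t], continuous (fun t => x t i)}) /\
  (forall (p : nat) (t : R), p%:R * tau < t -> t < p.+1%:R * tau ->
     forall i : 'I_N,
       is_derive t 1 (fun s => x s i)
         (- cn * x t i +
          gamma_th th (\sum_(j < N | Ep j i || Em j i)
             weights Ep Em cap cam lom him lop hip tau phi a0 x p.+1 i j
             * x t j))).

(* Main.v *)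
Require Import Defs.
From mathcomp Require Import all_boot all_order all_algebra.
From mathcomp Require Import all_classical all_reals all_analysis.
From mathcomp Require Import ring lra.
Import Order.TTheory GRing.Theory Num.Theory.
Import numFieldNormedType.Exports.
Local Open Scope classical_set_scope.
Local Open Scope ring_scope.
Lemma Bprop {R : realType} {a M s t : R} : 0 < a -> 0 < M -> 0 <= s -> s <= t ->
  0 <= M / (1 + a * s) - M / (1 + a * t) /\
  M / (1 + a * s) - M / (1 + a * t) <= a * (t - s) * (M / (1 + a * s)) /\
  M / (1 + a * s) - M / (1 + a * t) <= M * a * (t - s).
Proof.
move=> a0 M0 s0 st.
have u1 : 1 <= 1 + a * s by rewrite lerDl mulr_ge0 // ltW.
have t0 : 0 <= t := le_trans s0 st.
have v1 : 1 <= 1 + a * t by rewrite lerDl mulr_ge0 // ltW.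
have u0 : 0 < 1 + a * s by apply: lt_le_trans u1.
have v0 : 0 < 1 + a * t by apply: lt_le_trans v1.
have -> : M / (1 + a * s) - M / (1 + a * t) = a * (t - s) * (M / (1 + a * s)) / (1 + a * t).
  by field; rewrite ?gt_eqF.
have X0 : 0 <= a * (t - s) * (M / (1 + a * s)).
  apply: mulr_ge0; [apply: mulr_ge0|apply: divr_ge0]; rewrite ?subr_ge0 //; exact: ltW.
have Bs : M / (1 + a * s) <= M by rewrite ler_pdivrMr // ler_peMr // ltW.
split; first exact: (divr_ge0 X0 (ltW v0)).
split; first by rewrite ler_pdivrMr // ler_peMr.
rewrite ler_pdivrMr //.
have h1 : 0 <= a * (t - s) by rewrite mulr_ge0 ?subr_ge0 // ltW.
have h2 : 0 <= M * a * (t - s) by rewrite mulr_ge0 ?subr_ge0 // mulr_ge0 // ltW.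
move: Bs h1 h2 v1; set q := M / (1 + a * s); set v := 1 + a * t => Bs h1 h2 v1.
nra.
Qed.

Lemma cont_at {R:realType} {f : R -> R} {T : R} :
  {within [set t : R | 0 <= t], continuous f} -> 0 <= T ->
  forall e : R, 0 < e -> exists2 d : R, 0 < d &
    forall s : R, 0 <= s -> `|s - T| < d -> `|f s - f T| < e.
Proof.
move=> /subspace_continuousP cf T0 e e0.
have cT : f x @[x --> within [set t : R | 0 <= t] (nbhs T)] --> f T := cf T T0.
have /nbhs_normP [d /= d0 Hd] : \forall s \near T, 0 <= s -> `|f T - f s| < e.
  exact: (cvgr_dist_lt _ _ cT _ e0).
exists d => // s s0 sT.
rewrite distrC; apply: (Hd s) => //=.
by rewrite distrC.
Qed.

Lemma decay (R : realType) (N : nat) (cn D tau M : R)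
  (x : R -> 'I_N -> R) (F : nat -> R -> 'I_N -> R) :
  0 <= D -> D < cn -> 0 < tau -> 0 < M ->
  (forall i, {within [set t : R | 0 <= t], continuous (fun t => x t i)}) ->
  (forall (p : nat) t, p%:R * tau < t -> t < p.+1%:R * tau -> forall i,
      is_derive t 1 (fun s => x s i) (- cn * x t i + F p t i)) ->
  (forall p t i (V : R), 0 <= V -> (forall j, `|x t j| <= V) -> `|F p t i| <= D * V) ->
  (forall i, `|x 0 i| < M) ->
  forall t, 0 <= t -> forall i, `|x t i| < M / (1 + (cn - D) / 2 * t).
Proof.
move=> D0 Dcn tau0 M0 Hc Hd HF Hx0.
have a0 : 0 < (cn - D) / 2 by rewrite divr_gt0 // subr_gt0.
move: a0; set a := (cn - D) / 2 => a0.
have cna : cn = 2 * a + D by rewrite /a; field.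
set B := fun t => M / (1 + a * t).
have B0 t : 0 <= t -> 0 < B t.
  move=> t0; rewrite /B divr_gt0 //; apply: (@lt_le_trans _ _ 1) => //.
  by rewrite lerDl mulr_ge0 // ltW.
pose ok t := forall i, `|x t i| < B t.
suff : forall t, 0 <= t -> ok t by [].
apply: contrapT => /existsNP [t1 /not_implyP [t10 nok1]].
pose S := [set t | 0 <= t /\ forall s, 0 <= s -> s <= t -> ok s].
have ok0 : ok 0 by move=> i; rewrite /B mulr0 addr0 divr1.
have S0 : S 0.
  split; first by [].
  move=> s s0 s0'.
  have -> : s = 0 by apply/eqP; rewrite eq_le s0' s0.
  exact: ok0.
have hS : has_sup S.
  split; first by exists 0.
  exists t1 => t [t0 Ht]; rewrite leNgt; apply/negP => t1t.
  by apply: nok1; apply: Ht => //; apply: ltW.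
set T := sup S.
have ST s : 0 <= s -> s < T -> ok s.
  move=> s0 sT; have hp : 0 < T - s by rewrite subr_gt0.
  have [e [e0 He] Te] := sup_adherent hp hS.
  by apply: He => //; apply: ltW; move: Te; rewrite opprB addrCA subrr addr0.
have T0 : 0 <= T by apply: sup_upper_bound.
have [okT|nokT] := pselect (ok T).
  have H : \forall s \near T, forall i, 0 <= s -> T <= s -> `|x s i| < B s.
    apply: (@filter_forall R _ (fun i s => 0 <= s -> T <= s -> `|x s i| < B s) (nbhs T) (nbhs_filter T)) => i.
    have gap0 : 0 < B T - `|x T i| by rewrite subr_gt0.
    have e0 : 0 < (B T - `|x T i|) / 2 by rewrite divr_gt0.
    have [d1 d10 Hd1] := cont_at (Hc i) T0 _ e0.
    have h20 : 0 < (B T - `|x T i|) / (2 * M * a).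
      by apply: divr_gt0 => //; apply: mulr_gt0 => //; apply: mulr_gt0.
    apply/nbhs_normP; exists (Order.min d1 ((B T - `|x T i|) / (2 * M * a))) => /=.
      by rewrite lt_min d10 h20.
    move=> s /= sd s0 Ts.
    have nsT : `|T - s| = s - T by rewrite distrC ger0_norm // subr_ge0.
    move: sd; rewrite nsT lt_min => /andP [sd1 sd2].
    have := Hd1 s s0; rewrite distrC nsT => /(_ sd1) Hxs.
    have [_ [_ HB]] := Bprop a0 M0 T0 Ts.
    have Hma : M * a * (s - T) < M * a * ((B T - `|x T i|) / (2 * M * a)).
      by rewrite ltr_pM2l // mulr_gt0.
    have Hma2 : M * a * ((B T - `|x T i|) / (2 * M * a)) = (B T - `|x T i|) / 2.
      by field; rewrite (gt_eqF a0) (gt_eqF M0).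
    have tri : `|x s i| <= `|x T i| + `|x s i - x T i|.
      by rewrite -[x s i in leLHS](subrK (x T i)) addrC ler_normD.
    rewrite /B /= in HB Hxs tri Hma Hma2 *.
    lra.
  move: H => /nbhs_normP [d /= d0 Hdd].
  have Sd : S (T + d / 2).
    split; first by rewrite addr_ge0 // divr_ge0 // ltW.
    move=> s s0 sle; case: (ltP s T) => [sT|Ts]; first exact: ST.
    move=> i; apply: Hdd => //=.
    rewrite distrC ger0_norm ?subr_ge0 //.
    have : d / 2 < d by rewrite ltr_pdivrMr // ltr_pMr // ltr1n.
    lra.
  have := sup_upper_bound hS Sd.
  rewrite -/T; have : 0 < d / 2 by rewrite divr_gt0.
  lra.
move/existsNP: nokT => [i ni].
have BTx : B T <= `|x T i| by rewrite leNgt; apply/negP.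
have Tpos : 0 < T.
  rewrite lt_neqAle T0 andbT; apply/eqP => T0'.
  by apply: ni; rewrite -T0'; exact: ok0 i.
have Hn : exists n : nat, T <= n%:R * tau.
  exists (Num.Def.archi_bound (T / tau)).
  have := archi_boundP (divr_ge0 T0 (ltW tau0)).
  by rewrite ltr_pdivrMr // => /ltW.
have [m Hm Hmin] := ex_minnP Hn.
case: m Hm Hmin => [|p] Hm Hmin.
  by move: Hm; rewrite mul0r; move: Tpos; rewrite ltNge => /negP.
have ps : p%:R * tau < T.
  by rewrite ltNge; apply/negP => /Hmin; rewrite ltnn.
have cn0 : 0 < cn by apply: le_lt_trans Dcn.
pose sg : R := if 0 <= x T i then 1 else -1.
have sgT : sg * x T i = `|x T i|.
  rewrite /sg; case: ifP => h; first by rewrite mul1r ger0_norm.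
  by rewrite mulN1r ltr0_norm // ltNge h.
have sgu u : sg * u <= `|u|.
  rewrite /sg; case: ifP => _; first by rewrite mul1r ler_norm.
  by rewrite mulN1r -normrN ler_norm.
set BT := B T.
have BT0 : 0 < BT by apply: B0.
have rho0 : 0 < a * BT / (2 * cn) by apply: divr_gt0; apply: mulr_gt0.
have [d1 d10 Hd1] := cont_at (Hc i) T0 _ rho0.
have aD0 : 0 < a + D by lra.
have h0 : 0 < BT / (2 * (a + D) * M) by apply: divr_gt0 => //; apply: mulr_gt0 => //; apply: mulr_gt0.
set mn := Order.min (Order.min (T - p%:R * tau) d1) (BT / (2 * (a + D) * M)).
have mn0 : 0 < mn by rewrite !lt_min subr_gt0 ps d10 h0.
have [[mn1 mn2] mn3] : (mn <= T - p%:R * tau /\ mn <= d1) /\ mn <= BT / (2 * (a + D) * M).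
  by have := le_refl mn; rewrite {2}/mn !le_min => /andP [/andP [-> ->] ->].
set L := mn / 2.
have L0 : 0 < L by rewrite divr_gt0.
have Lmn : L < mn by rewrite /L ltr_pdivrMr // ltr_pMr // ltr1n.
set s := T - L.
have sT : s < T by rewrite /s ltrBlDr ltrDl.
have ps' : p%:R * tau < s by rewrite /s ltrBrDl -ltrBrDr; apply: lt_le_trans Lmn mn1.
have s0 : 0 <= s by apply: le_trans (ltW ps'); rewrite mulr_ge0 // ltW.
have hder : forall u, u \in `]s, T[ -> is_derive u 1 (fun u => x u i) (- cn * x u i + F p u i).
  move=> u; rewrite in_itv /= => /andP [su uT]; apply: Hd.
    exact: lt_trans ps' su.
  exact: lt_le_trans uT Hm.
have hcont : {within `[s, T], continuous (fun u => x u i)}.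
  apply: continuous_subspaceW (Hc i) => u /=; rewrite in_itv /= => /andP [su _].
  exact: le_trans su.
have [c cin Hmvt] := MVT sT hder hcont.
move: cin; rewrite in_itv /= => /andP [sc cT].
have c0 : 0 <= c by apply: le_trans (ltW sc).
have okc := ST c c0 cT.
have HFc := HF p c i (B c) (ltW (B0 c c0)) (fun j => ltW (okc j)).
have [Bsc _] := Bprop a0 M0 s0 (ltW sc).
have oks := ST s s0 sT i.
have xc : `|x c i - x T i| < a * BT / (2 * cn).
  apply: Hd1 => //; rewrite distrC ger0_norm ?subr_ge0 ?(ltW cT) //.
  apply: (lt_trans _ (lt_le_trans Lmn mn2)).
  rewrite ltrBlDr; move: sc; rewrite /s ltrBlDr; lra.
have [_ [BsT1 BsT2]] := Bprop a0 M0 s0 (ltW sT).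
have TsL : T - s = L by rewrite /s; ring.
rewrite TsL in BsT1 BsT2.
have Hm2 : sg * x T i - sg * x s i = (- cn * (sg * x c i) + sg * F p c i) * L.
  by rewrite -mulrBr Hmvt TsL; ring.
have sgc : `|x T i| - `|x c i - x T i| <= sg * x c i.
  have := sgu (x T i - x c i); rewrite distrC => h.
  have -> : sg * x c i = sg * x T i - sg * (x T i - x c i) by ring.
  rewrite sgT; lra.
have sgs := sgu (x s i).
have sgF := sgu (F p c i).
move: Hm2 sgc; rewrite sgT => Hm2 sgc.
set Y := - cn * (sg * x c i) + sg * F p c i.
move: Hm2 => Hm2.
have Bs0 : 0 <= B s by apply: ltW; apply: B0.
have K0 : (- (a * B s)) * L < Y * L.
  rewrite -Hm2; rewrite /B /= in BsT1 oks BTx *; rewrite /BT /B /= in BTx *. lra.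
rewrite ltr_pM2r // in K0.
have K1 : cn * (`|x T i| - `|x c i - x T i|) <= cn * (sg * x c i) by rewrite ler_pM2l.
have K2 : cn * BT <= cn * `|x T i| by rewrite ler_pM2l.
have K3 : cn * `|x c i - x T i| <= cn * (a * BT / (2 * cn)) by rewrite ler_pM2l // ltW.
have K4 : cn * (a * BT / (2 * cn)) = a * BT / 2 by field; rewrite gt_eqF.
have K5 : D * B c <= D * B s by rewrite ler_wpM2l // -subr_ge0.
have K6 : (a + D) * (B s - BT) <= (a + D) * (M * a * L) by rewrite ler_wpM2l // ltW.
have K7 : (a + D) * (M * a * L) < (a + D) * (M * a * (BT / (2 * (a + D) * M))).
  rewrite ltr_pM2l // ltr_pM2l; [exact: lt_le_trans Lmn mn3|exact: mulr_gt0 M0 a0].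
have K8 : (a + D) * (M * a * (BT / (2 * (a + D) * M))) = a * BT / 2.
  by field; rewrite (gt_eqF aD0) (gt_eqF M0).
have K9 : cn * BT = 2 * a * BT + D * BT by rewrite cna; ring.
rewrite /Y in K0.
move: HFc sgF K0 K1 K2 K3 K4 K5 K6 K7 K8 K9 BsT2.
rewrite /BT /B /=.
lra.
Qed.

Lemma clip_bnd {R : realType} (lo hi y : R) : lo <= hi -> lo <= clip lo hi y <= hi.
Proof.
move=> lh; rewrite /clip; case: ifP => h1; first by rewrite lh lexx.
case: ifP => h2; first by rewrite lexx lh.
by move/negbT: h1; move/negbT: h2; rewrite -!leNgt => -> ->.
Qed.

Lemma wu_bnd {R : realType} (N : nat) (Ep Em : rel 'I_N)
  (cap cam lom him lop hip : R) (phi : R -> R) a x i j :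
  lom < him -> him < 0 -> 0 < lop -> lop < hip ->
  `|weight_update Ep Em cap cam lom him lop hip phi a x i j| <= Num.max hip `|lom|.
Proof.
move=> lh h0 l0 lph.
have m1 : hip <= Num.max hip `|lom| by rewrite le_max lexx.
have m2 : `|lom| <= Num.max hip `|lom| by rewrite le_max lexx orbT.
have nl : `|lom| = - lom by rewrite ltr0_norm // (lt_trans lh).
rewrite /weight_update; case: (i == j); first by rewrite normr0; lra.
case: (Em j i).
  have /andP [c1 c2] := clip_bnd lom him (cam * a i j - phi (x i * x j)) (ltW lh).
  rewrite ler_norml; apply/andP; split; lra.
case: (Ep j i).
  have /andP [c1 c2] := clip_bnd lop hip (cap * a i j + phi (x i * x j)) (ltW lph).
  rewrite ler_norml; apply/andP; split; lra.
by rewrite normr0; lra.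
Qed.

Lemma gamma_bnd {R : realType} (th s : R) : `|gamma_th th s| <= `|s|.
Proof. by rewrite /gamma_th; case: ifP => _ //; rewrite normr0. Qed.

Lemma sum_bnd {R : realType} (N : nat) (E : rel 'I_N) (w : 'I_N -> R) (y : 'I_N -> R)
  (am V : R) i : 0 <= am -> 0 <= V ->
  (forall j, E j i -> `|w j| <= am) -> (forall j, `|y j| <= V) ->
  `|\sum_(j < N | E j i) w j * y j| <= (max_indeg E)%:R * am * V.
Proof.
move=> am0 V0 Hw Hy.
apply: (le_trans (ler_norm_sum _ _ _)).
apply: (@le_trans _ _ (\sum_(j < N | E j i) (am * V))).
  apply: ler_sum => j Ej; rewrite normrM; apply: ler_pM => //; exact: Hw.
have -> : \sum_(j < N | E j i) (am * V) = \sum_(j in [pred j : 'I_N | E j i]) (am * V) by [].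
have hk : (#|[pred j : 'I_N | E j i]|%:R : R) <= (max_indeg E)%:R.
  rewrite ler_nat.
  have -> : #|[pred j : 'I_N | E j i]| = indeg E i by rewrite /indeg cardsE.
  by rewrite /max_indeg; apply: (leq_bigmax i).
rewrite sumr_const -mulr_natr.
have := mulr_ge0 am0 V0.
nra.
Qed.

Theorem theorem1 (R : realType) (N : nat) (Ep Em : rel 'I_N)
  (cn cap cam th tau lom him lop hip phimax : R) (phi : R -> R) :
  (forall i j : 'I_N, ~~ (Ep j i && Em j i)) ->
  0 < cn -> 0 < cap -> cap < 1 -> 0 < cam -> cam < 1 ->
  0 < th -> 0 < tau ->
  lom < him -> him < 0 -> 0 < lop -> lop < hip ->
  (forall s, `|phi s| <= phimax) ->
  (max_indeg (fun j i => Ep j i || Em j i))%:R * Num.max hip `|lom| < cn ->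
  forall a0 : 'I_N -> 'I_N -> R,
    (forall eps : R, 0 < eps -> exists2 delta : R, 0 < delta &
       forall x : R -> 'I_N -> R,
         is_solution Ep Em cn cap cam th tau lom him lop hip phi a0 x ->
         (forall i, `|x 0 i| < delta) ->
         forall t, 0 <= t -> forall i, `|x t i| < eps) /\
    (forall x : R -> 'I_N -> R,
       is_solution Ep Em cn cap cam th tau lom him lop hip phi a0 x ->
       forall i, x t i @[t --> +oo] --> 0).
Proof.
move=> _ cn0 _ _ _ _ _ tau0 lh h0 l0 lph _ Hcn a0.
set am := Num.max hip `|lom|.
set D := (max_indeg (fun j i => Ep j i || Em j i))%:R * am.
have am0 : 0 <= am by rewrite le_max; apply/orP; left; apply: ltW; apply: lt_trans lph.
have D0 : 0 <= D by rewrite mulr_ge0.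
have a0' : 0 < (cn - D) / 2 by rewrite divr_gt0 // subr_gt0.
have key : forall x, is_solution Ep Em cn cap cam th tau lom him lop hip phi a0 x ->
    forall M, 0 < M -> (forall i, `|x 0 i| < M) ->
    forall t, 0 <= t -> forall i, `|x t i| < M / (1 + (cn - D) / 2 * t).
  move=> x [Hc Hd] M M0 Hx0.
  apply: (@decay R N cn D tau M x (fun p t i => gamma_th th (\sum_(j < N | Ep j i || Em j i)
      weights Ep Em cap cam lom him lop hip tau phi a0 x p.+1 i j * x t j))) => //.
  move=> p t i V V0 HV; apply: le_trans (gamma_bnd _ _) _.
  apply: (@sum_bnd R N (fun j i => Ep j i || Em j i)) => // j _.
  exact: wu_bnd.
split.
  move=> eps e0; exists eps => // x sol Hx0 t t0 i.
  apply: lt_le_trans (key x sol eps e0 Hx0 t t0 i) _.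
  have h1 : 1 <= 1 + (cn - D) / 2 * t by rewrite lerDl mulr_ge0 // ltW.
  rewrite ler_pdivrMr ?(lt_le_trans ltr01) //.
  by rewrite ler_peMr // ltW.
move=> x sol i.
set M := 1 + \sum_j `|x 0 j|.
have Hs : forall k, `|x 0 k| <= \sum_j `|x 0 j|.
  move=> k; rewrite (bigD1 k) //= lerDl; apply: sumr_ge0 => j _; exact: normr_ge0.
have M0 : 0 < M by rewrite /M; have := Hs i; have := normr_ge0 (x 0 i); lra.
have Hx0 : forall k, `|x 0 k| < M by move=> k; rewrite /M; have := Hs k; lra.
apply/cvgrPdist_lt => e e0.
have ae0 : 0 < (cn - D) / 2 * e by rewrite mulr_gt0.
near=> t.
have tb : M / ((cn - D) / 2 * e) <= t by near: t; apply: nbhs_pinfty_ge; rewrite num_real.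
have t0 : 0 <= t by apply: le_trans tb; rewrite divr_ge0 // ltW.
rewrite sub0r normrN; apply: lt_le_trans (key x sol M M0 Hx0 t t0 i) _.
have h1 : 0 < 1 + (cn - D) / 2 * t by rewrite ltr_wpDr // mulr_ge0 // ltW.
rewrite ler_pdivrMr //.
move: tb; rewrite ler_pdivrMr // => tb.
move: a0' e0 tb; set a := (cn - D) / 2 => a0' e0 tb.
nra.
Unshelve. all: by end_near.
Qed.
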